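(* There is an absolute constant $c$ such that the following holds. Let $G=(V,E)$ be a graph with $n$ vertices, $m$ edges and degeneracy $d$, let $\mathcal{C}=\{C_\ell\}_{\ell\in I}$ be an LA-succinct clique cover of $G$, and let $\mathcal{A}=\{A_v\}_{v\in V}$ and $\mathcal{D}=\{D_\ell\}_{\ell\in I}$ be its admissibility sets and admissibility duals. Then $$\|\mathcal{A}\|=\|\mathcal{D}\|\le c\cdot\min\{|\mathcal{C}|\,n,\ d\,m\}.$$
   Context: All graphs are finite, simple, undirected, with no isolated vertices; $n=|V|$, $m=|E|$; $N(v)$ open neighbourhood, $N[v]=N(v)\cup\{v\}$. Degeneracy $d:=\max_H\delta_H$ over subgraphs $H$ of $G$ ($\delta_H$ minimum degree). A clique is a vertex set inducing a complete subgraph. $\|\mathcal{F}\|:=\sum_{F\in\mathcal{F}}|F|$. A clique cover is an indexed family of cliques covering every edge. LA-succinct construction: maintain a family $\mathcal{C}$ of cliques of $G$, initially empty; an edge is uncovered if it is contained in no member. Update rule on an uncovered edge $\{u,v\}$: (1) if some $C_\ell\in\mathcal{C}$ has $C_\ell\cup\{u,v\}$ a clique of $G$, choose exactly one such $C_\ell$ and replace it by $C_\ell\cup\{u,v\}$; (2) otherwise add a new member $\{u,v\}$ with a new label. Step (1) is always applied when applicable. An LA-succinct clique cover is a clique cover of $G$ obtained from the empty family by repeatedly applying this rule to uncovered edges. For a clique cover $\{C_\ell\}_{\ell\in I}$: admissibility sets $A_v:=\{\ell\in I: C_\ell\subseteq N[v]\}$ for $v\in V$; admissibility duals $D_\ell:=\{v\in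 V: C_\ell\subseteq N[v]\}$ for $\ell\in I$. *)

(* Defs.v *)
From mathcomp Require Import all_boot all_order.
Set Implicit Arguments. Unset Strict Implicit. Unset Printing Implicit Defensive.

Section Graphs.
Variable V : finType.

(* A graph is given by its edge set E : {set {set V}}; each edge is a 2-set. *)
Definition simple_graph_no_isolated (E : {set {set V}}) : Prop :=
  (forall e, e \in E -> #|e| = 2) /\ (forall v : V, exists2 e, e \in E & v \in e).

Definition cnbhd (E : {set {set V}}) (v : V) : {set V} :=
  [set u | (u == v) || ([set u; v] \in E)].

Definition is_clique (E : {set {set V}}) (K : {set V}) : bool :=
  [forall u in K, forall w in K, (u != w) ==> ([set u; w] \in E)].

(* A subgraph H = (S, F): S nonempty vertex set, F a set of edges of G inside S. *)
Definition is_subgraph (E : {set {set V}}) (H : {set V} * {set {set V}}) : bool :=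
  [&& H.1 != set0, H.2 \subset E & [forall e in H.2, e \subset H.1]].

Definition sub_deg (H : {set V} * {set {set V}}) (v : V) : nat :=
  #|[set e in H.2 | v \in e]|.

(* minimum degree of H (the initial value #|V| exceeds every degree; S is nonempty) *)
Definition min_deg (H : {set V} * {set {set V}}) : nat :=
  \big[minn/#|V|]_(v in H.1) sub_deg H v.

Definition degeneracy (E : {set {set V}}) : nat :=
  \max_(H : {set V} * {set {set V}} | is_subgraph E H) min_deg H.

(* Families of cliques indexed by labels 0..size s - 1 (a seq). *)
Definition covered (s : seq {set V}) (e : {set V}) : bool :=
  has (fun C : {set V} => e \subset C) s.

Definition la_step (E : {set {set V}}) (s t : seq {set V}) : Prop :=
  exists2 e, e \in E /\ ~~ covered s e &
    ((exists l, [/\ l < size s, is_clique E (nth set0 s l :|: e) &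
                   t = set_nth set0 s l (nth set0 s l :|: e)])
     \/
     ((forall l, l < size s -> ~~ is_clique E (nth set0 s l :|: e)) /\
      t = rcons s e)).

Inductive la_reach (E : {set {set V}}) : seq {set V} -> Prop :=
| la_reach_nil : la_reach E [::]
| la_reach_step s t : la_reach E s -> la_step E s t -> la_reach E t.

Definition is_clique_cover (E : {set {set V}}) (s : seq {set V}) : Prop :=
  (forall C, C \in s -> is_clique E C) /\ (forall e, e \in E -> covered s e).

Definition LA_succinct_cover (E : {set {set V}}) (s : seq {set V}) : Prop :=
  la_reach E s /\ is_clique_cover E s.

Definition adm_set (E : {set {set V}}) (s : seq {set V}) (v : V) : {set 'I_(size s)} :=
  [set l : 'I_(size s) | nth set0 s l \subset cnbhd E v].

Definition adm_dual (E : {set {set V}}) (s : seq {set V}) (l : 'I_(size s)) : {set V} :=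
  [set v : V | nth set0 s l \subset cnbhd E v].

Definition norm_A (E : {set {set V}}) (s : seq {set V}) : nat :=
  \sum_(v : V) #|adm_set E s v|.

Definition norm_D (E : {set {set V}}) (s : seq {set V}) : nat :=
  \sum_(l : 'I_(size s)) #|@adm_dual E s l|.

End Graphs.

(* Main.v *)
Require Import Defs.
From mathcomp Require Import all_boot all_order.
From mathcomp Require Import zify.

Set Implicit Arguments. Unset Strict Implicit. Unset Printing Implicit Defensive.

Lemma sum_card (T : finType) (A : {pred T}) (P : pred T) :
  \sum_(i in A) (P i : nat) = #|[set i in A | P i]|.
Proof.
rewrite -sum1_card [LHS]big_mkcond [RHS]big_mkcond; apply: eq_bigr => i _.
by rewrite !inE; case: (i \in A); case: (P i).
Qed.

Lemma dc (I J : finType) (P : I -> J -> bool) :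
  \sum_i #|[set j | P i j]| = \sum_j #|[set i | P i j]|.
Proof.
have h (A : finType) (p : pred A) : #|[set x | p x]| = \sum_x (p x : nat).
  rewrite -sum1_card big_mkcond; apply: eq_bigr => x _; rewrite inE.
  by case: (p x).
under eq_bigr do rewrite h.
rewrite exchange_big; apply: eq_bigr => j _; by rewrite h.
Qed.

Section Main.
Variable V : finType.
Variable E : {set {set V}}.
Hypothesis HE : forall e, e \in E -> #|e| = 2.

Local Notation ES S := [set e in E | e \subset S].
Local Notation K e := [set w | e \subset cnbhd E w].
Local Notation N S v := [set x in S | [set x; v] \in E].
Local Notation deg S v := #|[set e in ES S | v \in e]|.
Definition Q (S : {set V}) := \sum_(e in ES S) #|K e :&: S|.

Lemma cnbhdE u w : (u \in cnbhd E w) = (u == w) || ([set u; w] \in E).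
Proof. by rewrite /cnbhd inE. Qed.

Lemma notloop x : [set x; x] \notin E.
Proof. by apply/negP => /HE; rewrite setUid cards1. Qed.

Lemma Lsing x (Y : {set V}) :
  #|[set e in E | (x \in e) && (e :\ x \subset Y)]| <= #|Y|.
Proof.
set A := [set e in E | _].
rewrite -(@card_in_imset _ _ (fun e => e :\ x) A).
  apply: leq_trans (leq_imset_card (fun y => [set y]) Y).
  apply: subset_leq_card; apply/subsetP => _ /imsetP[e He ->].
  move: He; rewrite inE => /andP[/HE e2 /andP[xe sub]].
  have : #|e :\ x| == 1 by move: e2; rewrite (cardsD1 x) xe add1n => -[->].
  case/cards1P => y Ey; rewrite Ey; apply/imsetP; exists y => //.
  by move: sub; rewrite Ey sub1set.
move=> e1 e2; rewrite !inE => /andP[_ /andP[x1 _]] /andP[_ /andP[x2 _]] eq.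
by rewrite -(setD1K x1) -(setD1K x2) eq.
Qed.

Lemma N_le_deg (S : {set V}) (v : V) : v \in S -> #|N S v| <= deg S v.
Proof.
move=> vS.
rewrite -(@card_in_imset _ _ (fun x => [set x; v]) (N S v)).
  apply: subset_leq_card; apply/subsetP => _ /imsetP[x Hx ->].
  move: Hx; rewrite !inE => /andP[xS xE].
  rewrite xE subUset !sub1set xS vS /=.
  by rewrite eqxx orbT.
move=> x y; rewrite !inE => /andP[_ xE] /andP[_ yE] eq.
have : x \in [set y; v] by rewrite -eq set21.
rewrite !inE => /orP[/eqP //| /eqP xv].
by move: xE; rewrite xv (negbTE (notloop _)).
Qed.

Lemma K_sub (S : {set V}) (v : V) (e : {set V}) : v \in e -> K e :&: S \subset v |: N S v.
Proof.
move=> ve; apply/subsetP => w; rewrite !inE => /andP[/subsetP sub wS].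
have := sub v ve; rewrite cnbhdE => /orP[/eqP ->|vwE]; first by rewrite eqxx.
by rewrite wS setUC vwE orbT.
Qed.

Lemma part2 (S : {set V}) (v : V) : v \in S ->
  \sum_(e in ES (S :\ v)) (v \in K e) <= #|N S v| * #|N S v|.
Proof.
move=> vS; set X := N S v.
apply: (@leq_trans (\sum_(e in [set e in E | e \subset X]) 1)).
  rewrite sum_card sum1_card; apply: subset_leq_card; apply/subsetP => e.
  rewrite !inE => /andP[/andP[eE eS] vK]; rewrite eE /=.
  apply/subsetP => x xe; have := subsetP eS x xe; rewrite !inE => /andP[xv xS].
  have := subsetP vK x xe; rewrite cnbhdE (negbTE xv) /= => ->.
  by rewrite xS.
apply: (@leq_trans (\sum_(e in [set e in E | e \subset X]) \sum_(x in X) (x \in e))).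
  apply: leq_sum => e; rewrite inE => /andP[eE eX].
  have : 0 < #|e| by rewrite HE.
  case/card_gt0P => x xe; rewrite (bigD1 x) /=; first by rewrite xe.
  exact: subsetP eX x xe.
rewrite exchange_big /= -sum_nat_const; apply: leq_sum => x xX.
rewrite sum_card; apply: leq_trans (Lsing x X); apply: subset_leq_card.
apply/subsetP => e; rewrite !inE => /andP[/andP[eE eX] xe]; rewrite eE xe /=.
by apply: subset_trans eX; apply: subD1set.
Qed.

Lemma Qbound d (Hd : forall S : {set V}, S != set0 -> exists2 v, v \in S & deg S v <= d) :
  forall S : {set V}, Q S <= (2 * d + 1) * #|ES S|.
Proof.
move=> S.
have Q0 : Q set0 = 0.
  by rewrite /Q; apply: big1 => e _; rewrite setI0 cards0.
move: {2}#|S| (leqnn #|S|) => n; elim: n S => [|n IH] S Sn.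
  have /cards0_eq -> : #|S| = 0 by lia.
  by rewrite Q0.
case: (eqVneq S set0) => [->|Sne]; first by rewrite Q0.
have [v vS degv] := Hd S Sne.
set S' := S :\ v.
have S'n : #|S'| <= n by move: Sn; rewrite (cardsD1 v S) vS.
have IHS := IH S' S'n.
have hN := N_le_deg vS.
have hP2 := part2 vS.
have card_split : #|ES S| = deg S v + #|ES S'|.
  rewrite -(cardsID [set e : {set V} | v \in e] (ES S)); congr addn; apply: eq_card => e.
    by rewrite !inE.
  rewrite !inE /S' subsetD1; by case: (v \in e); case: (e \in E); case: (e \subset S).
have Qsplit : Q S <= deg S v * (deg S v).+1 +
     (Q S' + \sum_(e in ES S') (v \in K e)).
  rewrite /Q (bigID (fun e : {set V} => v \in e)) /=; apply: leq_add.
    rewrite (eq_bigl (fun e => e \in [set e in ES S | v \in e])); last first.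
      by move=> e; rewrite !inE.
    rewrite -sum_nat_const; apply: leq_sum => e; rewrite inE => /andP[_ ve].
    apply: leq_trans (subset_leq_card (K_sub S ve)) _.
    by rewrite cardsU1; move: hN; case: (v \notin _) => /=; lia.
  rewrite (eq_bigl (fun e => e \in ES S')); last first.
    move=> e; rewrite !inE /S' subsetD1; by case: (v \in e); case: (e \in E); case: (e \subset S).
  rewrite -big_split /=; apply: leq_sum => e _.
  rewrite (cardsD1 v) -setIDA addnC; apply: leq_add => //.
  by rewrite in_setI; case: (v \in [set w | _]) => /=; [exact: leq_b1 | ].
have h1 : #|N S v| * #|N S v| <= deg S v * d by apply: leq_mul => //; apply: leq_trans hN degv.
have h2 : deg S v * (deg S v).+1 <= deg S v * d.+1 by apply: leq_mul; [exact: leqnn | rewrite ltnS].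
move: hP2; rewrite -/S' => hP2.
rewrite card_split; nia.
Qed.

Lemma lowdeg (S : {set V}) : S != set0 -> (degeneracy E).+1 <= #|V| ->
  exists2 v, v \in S & deg S v <= degeneracy E.
Proof.
move=> Sne dV.
case: (pickP [pred v | (v \in S) && (deg S v <= degeneracy E)]) => [v /andP[] | none].
  by exists v.
have : (degeneracy E).+1 <= min_deg (S, ES S).
  rewrite /min_deg; apply: (big_ind (fun x => (degeneracy E).+1 <= x)) => //.
    by move=> x y hx hy; rewrite leq_min hx hy.
  move=> i iS; have := none i; rewrite /= iS /= => /negbT.
  by rewrite -ltnNge.
have : min_deg (S, ES S) <= degeneracy E.
  rewrite /degeneracy; have h := (@leq_bigmax_cond _ (fun H => is_subgraph E H) (@min_deg V) (S, ES S)); apply: h.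
  rewrite /is_subgraph /= Sne /=; apply/andP; split.
    by apply/subsetP => e; rewrite inE => /andP[].
  by apply/forall_inP => e; rewrite inE => /andP[].
lia.
Qed.

Lemma deg_pos : E != set0 -> 1 <= degeneracy E.
Proof.
case/set0Pn => e eE.
have e2 := HE eE.
rewrite /degeneracy; have h := (@leq_bigmax_cond _ (fun H => is_subgraph E H) (@min_deg V) (e, [set e])).
apply: leq_trans (h _).
  rewrite /min_deg; apply: (big_ind (fun x => 1 <= x)).
  - by apply: leq_trans (max_card e); rewrite e2.
  - by move=> x y hx hy; rewrite leq_min hx hy.
  - move=> v ve; apply/card_gt0P; exists e; by rewrite !inE eqxx ve.
rewrite /is_subgraph /=; apply/and3P; split.
- have : 0 < #|e| by rewrite e2.
  by case/card_gt0P => x xe; apply/set0Pn; exists x.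
- by rewrite sub1set.
- by apply/forall_inP => e'; rewrite inE => /eqP ->.
Qed.

Lemma la_inv s : la_reach E s -> exists g : seq {set V},
  [/\ size g = size s, uniq g, {subset g <= E} &
      forall i, i < size s -> nth set0 g i \subset nth set0 s i].
Proof.
elim => [|{}s t _ [g [sz ug gE gs]] [e [eE ncov] [[l [ls _ ->]] | [_ ->]]]].
- by exists [::]; split.
- have szt : size (set_nth set0 s l (nth set0 s l :|: e)) = size s.
    by rewrite size_set_nth (maxn_idPr ls).
  exists g; split => //; first by rewrite szt.
  move=> i; rewrite szt => ilt; rewrite nth_set_nth /=.
  case: eqP => [->|_]; last exact: gs.
  by apply: subset_trans (gs l ls) _; apply: subsetUl.
- exists (rcons g e); split.
  + by rewrite !size_rcons sz.
  + rewrite rcons_uniq ug andbT; apply/negP => /(nthP set0) [i ig ei].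
    apply: (negP ncov); apply/hasP; exists (nth set0 s i).
      by apply: mem_nth; rewrite -sz.
    by rewrite -ei; apply: gs; rewrite -sz.
  + by move=> x; rewrite mem_rcons inE => /orP[/eqP->|/gE].
  + move=> i; rewrite size_rcons => ilt; rewrite !nth_rcons sz.
    case: (ltnP i (size s)) => [il|_]; first exact: gs.
    by case: eqP.
Qed.

End Main.

Theorem mainTheorem15 :
  exists c : nat,
  forall (V : finType) (E : {set {set V}}) (s : seq {set V}),
    simple_graph_no_isolated E ->
    LA_succinct_cover E s ->
    norm_A E s = norm_D E s /\
    norm_A E s <= c * minn (size s * #|V|) (degeneracy E * #|E|).
Proof.
exists 3 => V E s [HE _] [Hr _].
have eqAD : norm_A E s = norm_D E s by exact: dc.
split => //.
have [g [sz ug gE gs]] := la_inv Hr.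
have hA : norm_A E s <= size s * #|V|.
  rewrite mulnC /norm_A -sum_nat_const; apply: leq_sum => v _.
  by apply: leq_trans (max_card _) _; rewrite card_ord.
have sE : size s <= #|E|.
  by rewrite -sz cardE; apply: uniq_leq_size => // x /gE; rewrite mem_enum.
have hD : norm_D E s <= Q E setT.
  rewrite /norm_D.
  apply: (@leq_trans (\sum_(l < size s) #|[set w | nth set0 g l \subset cnbhd E w]|)).
    apply: leq_sum => l _; apply: subset_leq_card; apply/subsetP => w.
    by rewrite !inE => H; apply: subset_trans (gs l (ltn_ord l)) H.
  have -> : \sum_(l < size s) #|[set w | nth set0 g l \subset cnbhd E w]|
          = \sum_(e <- g) #|[set w | e \subset cnbhd E w]|.
    by rewrite (big_nth set0) big_mkord sz.
  rewrite big_uniq // /Q.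
  rewrite (eq_bigl (fun e => e \in E)); last by move=> e; rewrite inE subsetT andbT.
  under [X in _ <= X]eq_bigr do rewrite setIT.
  rewrite !(big_mkcond (fun e => e \in _)) /=; apply: leq_sum => e _.
  by case: ifP => [/gE -> | _].
rewrite minnMr leq_min; apply/andP; split; first by lia.
case: (eqVneq E set0) => [E0|Ene].
  have : size s = 0 by move: sE; rewrite E0 cards0; lia.
  move=> s0; move: hA; rewrite s0 mul0n; lia.
have d1 := deg_pos HE Ene.
case: (leqP (degeneracy E).+1 #|V|) => dV.
  have := Qbound HE (fun S Sne => lowdeg (E := E) Sne dV) setT.
  have -> : [set e in E | e \subset setT] = E by apply/setP => e; rewrite inE subsetT andbT.
  move=> hQ.
  have : (2 * degeneracy E + 1) * #|E| <= 3 * (degeneracy E * #|E|).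
    rewrite mulnA; apply: leq_mul => //; lia.
  lia.
have : size s * #|V| <= #|E| * degeneracy E by apply: leq_mul => //; lia.
lia.
Qed.
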